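(* Let $G$ be a smallest counterexample to the statement ''every $n$-vertex triangulation has an independent dominating set of size at most $n/3$'' (i.e., $G$ is a triangulation on $n$ vertices with no independent dominating set of size at most $n/3$, and every triangulation with fewer vertices has an independent dominating set of size at most one third of its number of vertices). Let $\psi$ be a partial proper $4$-coloring of $G$ such that every uncolored vertex has degree exactly four, $|\psi[v]|\ge 3$ for every vertex $v$, and $|\psi[v]|=4$ for every vertex $v$ of degree at most five, and let $\overline{C}$ be the set of uncolored vertices. Then the bad subgraph $G_B$ of $G$ has a vertex cover of size at most $|\overline{C}|$.
   Context: Graphs are finite, undirected and simple. A triangulation is a planar graph embedded in the plane such that every face, including the outer face, is bounded by a cycle on three edges. A set $S\subseteq V(G)$ is an independent dominating set if no two vertices of $S$ are adjacent and every vertex not in $S$ has a neighbor in $S$. A partial proper $4$-coloring assigns to some vertices colors from $\{1,2,3,4\}$ with adjacent colored vertices receiving distinct colors. $\psi[v]$ is the set of colors used by $\psi$ on the closed neighborhood $N[v]$. For $i\in\{1,2,3,4\}$, $C_i$ is the set of vertices of color $i$, and $U_i$ is the set of vertices of $G$ not in $C_i$ and having no neighbor in $C_i$. A bad edge is an edge of $G$ between $U_i$ and $U_j$ for some $i\neq j$; letting $E_B$ be the set of bad edges and $V_B$ the set of their endpoints, the bad subgraph is $G_B=(V_B,E_B)$. A vertex cover of $G_B$ is a set of vertices meeting every edge of $G_B$. *)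

(* Defs.v *)
From mathcomp Require Import all_boot all_fingroup.
Set Implicit Arguments. Unset Strict Implicit. Unset Printing Implicit Defensive.

Section Graphs.
Variable T : finType.
Variable e : rel T.

Definition simple_graph : Prop := symmetric e /\ irreflexive e.

Definition dart (d : T * T) : bool := e d.1 d.2.
Definition darts : {set T * T} := [set d | dart d].

(* Combinatorial (rotation-system) embedding.  rot sends a dart (x,y) to the
   next dart (x,y') around x; the face successor of (x,y) is rot (y,x). *)
Definition face_succ (rot : {perm T * T}) (d : T * T) : T * T := rot (d.2, d.1).

Definition is_rotation (rot : {perm T * T}) : Prop :=
  (forall d, dart d -> dart (rot d) /\ (rot d).1 = d.1) /\
  (forall x y z, e x y -> e x z -> exists k, iter k rot (x, y) = (x, z)).

Definition faces (rot : {perm T * T}) : {set {set T * T}} :=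
  [set [set d' | fconnect (face_succ rot) d d'] | d in darts].

Definition connected_graph : Prop := forall x y : T, connect e x y.

(* plane embedding: connected rotation system satisfying Euler's formula
   V - E + F = 2  (here written  2V + 2F = #darts + 4, with #darts = 2E) *)
Definition plane_embedding (rot : {perm T * T}) : Prop :=
  is_rotation rot /\ connected_graph /\
  2 * #|T| + 2 * #|faces rot| = #|darts| + 4.

(* triangulation: a simple plane graph every face of which (including the
   outer one) is bounded by a cycle on three edges, i.e. has 3 darts *)
Definition triangulation : Prop :=
  simple_graph /\
  exists rot : {perm T * T}, plane_embedding rot /\
    forall f, f \in faces rot -> #|f| = 3.

Definition independent (S : {set T}) : bool :=
  [forall x in S, forall y in S, ~~ e x y].
Definition dominating (S : {set T}) : bool :=
  [forall x, (x \notin S) ==> [exists y in S, e x y]].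
Definition independent_dominating (S : {set T}) : bool :=
  independent S && dominating S.

Definition has_small_ids : Prop :=
  exists S : {set T}, independent_dominating S /\ 3 * #|S| <= #|T|.

Definition deg (v : T) : nat := #|[set u | e v u]|.

(* partial colourings: None = uncoloured *)
Definition proper_partial_4col (psi : T -> option 'I_4) : Prop :=
  forall x y, e x y -> psi x <> None -> psi x <> psi y.

Definition closed_colors (psi : T -> option 'I_4) (v : T) : {set 'I_4} :=
  [set c | [exists u, ((u == v) || e v u) && (psi u == Some c)]].

Definition color_class (psi : T -> option 'I_4) (i : 'I_4) : {set T} :=
  [set v | psi v == Some i].

Definition U_set (psi : T -> option 'I_4) (i : 'I_4) : {set T} :=
  [set v | (v \notin color_class psi i) &&
           ~~ [exists u in color_class psi i, e v u]].

Definition uncolored (psi : T -> option 'I_4) : {set T} := [set v | psi v == None].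

Definition bad_edge (psi : T -> option 'I_4) (x y : T) : bool :=
  e x y && [exists i, exists j, (i != j) && (x \in U_set psi i) && (y \in U_set psi j)].

Definition bad_vertices (psi : T -> option 'I_4) : {set T} :=
  [set x | [exists y, bad_edge psi x y || bad_edge psi y x]].

Definition bad_vertex_cover (psi : T -> option 'I_4) (X : {set T}) : Prop :=
  X \subset bad_vertices psi /\
  forall x y, bad_edge psi x y -> x \in X \/ y \in X.

End Graphs.

Definition smallest_counterexample (T : finType) (e : rel T) : Prop :=
  triangulation e /\ ~ has_small_ids e /\
  forall (T' : finType) (e' : rel T'), #|T'| < #|T| -> triangulation e' -> has_small_ids e'.

(* Main.v *)
Require Import Defs.
From mathcomp Require Import all_boot all_fingroup.
From mathcomp Require Import zify.
Set Implicit Arguments. Unset Strict Implicit. Unset Printing Implicit Defensive.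

Definition nbh (L R : finType) (E : L -> R -> bool) (A : {set L}) : {set R} :=
  [set y | [exists x in A, E x y]].

Lemma nbhU (L R : finType) (E : L -> R -> bool) (A B : {set L}) :
  nbh E (A :|: B) = nbh E A :|: nbh E B.
Proof.
apply/setP=> y; rewrite !inE; apply/existsP/orP.
  case=> x /andP[]; rewrite inE => /orP[xA|xA] Exy.
    by left; apply/existsP; exists x; rewrite xA.
  by right; apply/existsP; exists x; rewrite xA.
by case=> /existsP[x /andP[xA Exy]]; exists x; rewrite inE xA ?orbT.
Qed.

Lemma nbh_sub (L R : finType) (E : L -> R -> bool) (A B : {set L}) :
  A \subset B -> nbh E A \subset nbh E B.
Proof.
move=> sAB; apply/subsetP=> y; rewrite !inE => /existsP[x /andP[xA Exy]].
by apply/existsP; exists x; rewrite (subsetP sAB).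
Qed.

Lemma cardsUD (T : finType) (A B : {set T}) : #|A :|: B| = #|A| + #|B :\: A|.
Proof. have := cardsU A B; have := cardsID A B; rewrite setIC; lia. Qed.

Lemma hall (L R : finType) (r0 : R) (E : L -> R -> bool) (S : {set L}) :
  (forall A : {set L}, A \subset S -> #|A| <= #|nbh E A|) ->
  exists f : L -> R, {in S, forall x, E x (f x)} /\ {in S &, injective f}.
Proof.
move: {2}#|S| (leqnn #|S|) => n; elim: n E S => [|n IH] E S.
  rewrite leqn0 cards_eq0 => /eqP -> _; exists (fun _ => r0); split => x; by rewrite inE.
move=> leS hc.
case: (boolP [exists A : {set L}, [&& A \subset S, A != set0, A != S & #|nbh E A| <= #|A|]]).
  case/existsP => A /and4P [sAS nA0 nAS cA].
  have ltA : #|A| < #|S| by apply: proper_card; rewrite properEneq nAS.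
  have [f1 [E1 I1]] : exists f : L -> R, {in A, forall x, E x (f x)} /\ {in A &, injective f}.
    apply: IH; first by rewrite -ltnS (leq_trans ltA).
    by move=> B sBA; apply: hc; apply: subset_trans sAS.
  set E2 := fun x y => E x y && (y \notin nbh E A).
  have ltSA : #|S :\: A| < #|S|.
    rewrite -(cardsID A S) (setIidPr sAS) -add1n leq_add2r lt0n cards_eq0 //.
  have [f2 [E2f I2]] : exists f : L -> R, {in S :\: A, forall x, E2 x (f x)} /\ {in S :\: A &, injective f}.
    apply: IH; first by rewrite -ltnS (leq_trans ltSA).
    move=> B sB.
    have sBS : B \subset S := subset_trans sB (subsetDl S A).
    have hAB : #|A :|: B| <= #|nbh E A :|: nbh E B|.
      by rewrite -nbhU; apply: hc; rewrite subUset sAS sBS.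
    have -> : nbh E2 B = nbh E B :\: nbh E A.
      apply/setP=> y; rewrite !inE /E2; apply/existsP/andP.
        case=> x /and3P[xB Exy]; rewrite inE => ny; split=> //.
        by apply/existsP; exists x; rewrite xB.
      by case=> ny /existsP[x /andP[xB Exy]]; exists x; rewrite xB Exy inE ny.
    have dAB : B :\: A = B.
      apply/setP=> x; rewrite inE andb_idl // => xB.
      by have := subsetP sB x xB; rewrite inE => /andP[].
    have := cardsUD A B; have := cardsUD (nbh E A) (nbh E B); rewrite dAB => h1 h2.
    move: hAB; rewrite h1 h2 => hAB; lia.
  exists (fun x => if x \in A then f1 x else f2 x); split.
    move=> x xS; case: ifP => xA; first exact: E1.
    by have /andP[] := E2f x ltac:(by rewrite inE xA xS).
  move=> x1 x2 x1S x2S; case: ifP => x1A; case: ifP => x2A.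
  - exact: I1.
  - move=> eq; have := E2f x2 ltac:(by rewrite inE x2A x2S); rewrite /E2 -eq => /andP[_].
    by rewrite inE; case/existsP; exists x1; rewrite x1A E1.
  - move=> eq; have := E2f x1 ltac:(by rewrite inE x1A x1S); rewrite /E2 eq => /andP[_].
    by rewrite inE; case/existsP; exists x2; rewrite x2A E1.
  - by apply: I2; rewrite inE ?x1A ?x2A.
rewrite negb_exists => /forallP hA.
case: (set_0Vmem S) => [-> | [x xS]].
  by exists (fun _ => r0); split => x; rewrite inE.
have : 0 < #|nbh E [set x]| by apply: leq_trans (hc _ _); rewrite ?cards1 // sub1set.
rewrite card_gt0 => /set0Pn [y]; rewrite inE => /existsP [x' /andP[]]; rewrite inE => /eqP -> Exy.
set E' := fun u v => E u v && (v != y).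
have [f' [E'f I']] : exists f : L -> R, {in S :\ x, forall u, E' u (f u)} /\ {in S :\ x &, injective f}.
  apply: IH.
    by move: leS; rewrite (cardsD1 x S) xS.
  move=> B sB; case: (eqVneq B set0) => [->|nB0]; first by rewrite cards0.
  have sBS : B \subset S := subset_trans sB (subsetDl S _).
  have nBS : B != S by apply/eqP => eB; have := subsetP sB x; rewrite eB xS !inE eqxx => /(_ isT).
  have := hA B; rewrite sBS nB0 nBS /= -ltnNge => hlt.
  have -> : nbh E' B = nbh E B :\ y.
    apply/setP=> v; rewrite !inE /E'; apply/existsP/andP.
      by case=> u /and3P[uB Euv nv]; split=> //; apply/existsP; exists u; rewrite uB.
    by case=> nv /existsP[u /andP[uB Euv]]; exists u; rewrite uB Euv.
  have := cardsD1 y (nbh E B); case: (y \in nbh E B) => /=; lia.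
exists (fun u => if u == x then y else f' u); split.
  move=> u uS; case: eqP => [-> //|/eqP ux].
  by have /andP[] := E'f u ltac:(by rewrite !inE ux uS).
move=> u1 u2 u1S u2S; case: eqP => [->|/eqP u1x]; case: eqP => [-> //|/eqP u2x].
- move=> eq; have := E'f u2 ltac:(by rewrite !inE u2x u2S); by rewrite /E' -eq eqxx andbF.
- move=> eq; have := E'f u1 ltac:(by rewrite !inE u1x u1S); by rewrite /E' eq eqxx andbF.
- by apply: I'; rewrite !inE ?u1x ?u2x.
Qed.

Lemma konig (T : finType) (r0 : T) (E : T -> T -> bool) :
  exists (A : {set T}) (f g : T -> T),
   [/\ {in ~: A, forall x, E x (f x) && (f x \notin nbh E A)}, {in ~: A &, injective f},
       {in nbh E A, forall y, E (g y) y && (g y \in A)} & {in nbh E A &, injective g}].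
Proof.
pose w (A : {set T}) := #|A| + #|~: nbh E A|.
have [A _ maxA] : extremum_spec geq (fun _ => true) w [arg max_(A > set0) w A] by apply: arg_maxnP.
have maxA' : forall B, w B <= w A by move=> B; apply: maxA.
have hc1 : forall B : {set T}, B \subset ~: A ->
    #|B| <= #|nbh (fun x y => E x y && (y \notin nbh E A)) B|.
  move=> B sB.
  have := maxA' (A :|: B); rewrite /w nbhU.
  have -> : nbh (fun x y => E x y && (y \notin nbh E A)) B = nbh E B :\: nbh E A.
    apply/setP=> y; rewrite !inE; apply/existsP/andP.
      case=> x /and3P[xB Exy]; rewrite ?inE => ny; split=> //.
      by apply/existsP; exists x; rewrite xB.
    by case=> ny /existsP[x /andP[xB Exy]]; exists x; rewrite xB Exy ?inE ny.
  have dAB : B :\: A = B.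
    apply/setP=> x; rewrite inE andb_idl // => xB.
    by have := subsetP sB x xB; rewrite inE.
  have := cardsUD A B; rewrite dAB => ->.
  have := cardsID (nbh E B) (~: nbh E A).
  rewrite setCU; have -> : ~: nbh E A :\: nbh E B = ~: nbh E A :&: ~: nbh E B.
    by apply/setP=> y; rewrite !inE andbC.
  have -> : ~: nbh E A :&: nbh E B = nbh E B :\: nbh E A.
    by apply/setP=> y; rewrite !inE andbC.
  lia.
have [f [Ef If]] := hall r0 hc1.
have hc2 : forall C : {set T}, C \subset nbh E A ->
    #|C| <= #|nbh (fun y x => E x y && (x \in A)) C|.
  move=> C sC.
  set NC := nbh (fun y x => E x y && (x \in A)) C.
  set A' := A :\: NC.
  have := maxA' A'; rewrite /w.
  have sNC : NC \subset A by apply/subsetP=> x; rewrite inE => /existsP[y /and3P[]].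
  have h2 := cardsID NC A; rewrite (setIidPr sNC) in h2.
  have h3 : nbh E A' :|: C \subset nbh E A.
    by rewrite subUset sC nbh_sub // subsetDl.
  have h4 : [disjoint nbh E A' & C].
    apply/pred0P=> y /=; apply/negbTE/negP => /andP[]; rewrite inE => /existsP[x /andP[]].
    rewrite inE => /andP[xNC xA] Exy yC; move/negP: xNC; apply.
    by rewrite inE; apply/existsP; exists y; rewrite yC Exy xA.
  have h5 := cardsU (nbh E A') C.
  have h6 : #|nbh E A' :&: C| = 0 by apply/eqP; rewrite cards_eq0 setI_eq0 h4.
  have h7 := subset_leq_card h3.
  have h8 := cardsC (nbh E A); have h9 := cardsC (nbh E A').
  fold A' in h2; lia.
have [g [Eg Ig]] := hall r0 hc2.
by exists A, f, g; split.
Qed.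

Lemma tri_face (T : finType) (e : rel T) (rot : {perm T * T}) :
  symmetric e -> irreflexive e -> is_rotation e rot ->
  (forall f, f \in faces e rot -> #|f| = 3) ->
  forall x y, e x y -> exists z,
    [/\ rot (y, x) = (y, z), rot (z, y) = (z, x), rot (x, z) = (x, y), e y z & e z x].
Proof.
move=> esym eirr [rd _] hf x y exy.
set fs := face_succ rot.
have finj : injective fs.
  move=> [a b] [c d]; rewrite /fs /face_succ /= => /perm_inj [-> ->] //.
have hF : #|[set d' | fconnect fs (x, y) d'] | = 3.
  apply: hf; apply/imsetP; exists (x, y) => //; by rewrite inE.
have ord3 : fingraph.order fs (x, y) = 3.
  by rewrite -hF /fingraph.order; apply: eq_card => d; rewrite inE.
have it3 := iter_order finj (x, y); rewrite ord3 /= in it3.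
have dyx : dart e (y, x) by rewrite /dart /= esym.
have [d1 r1] := rd _ dyx.
set z := (rot (y, x)).2.
have ryx : rot (y, x) = (y, z) by rewrite [LHS]surjective_pairing r1.
have eyz : e y z by move: d1; rewrite /dart ryx.
have dzy : dart e (z, y) by rewrite /dart /= esym.
have [d2 r2] := rd _ dzy.
set t := (rot (z, y)).2.
have rzy : rot (z, y) = (z, t) by rewrite [LHS]surjective_pairing r2.
have ezt : e z t by move: d2; rewrite /dart rzy.
have dtz : dart e (t, z) by rewrite /dart /= esym.
have [d3 r3] := rd _ dtz.
move: it3; rewrite /fs /face_succ /= ryx /= rzy /= => it3.
have tx : t = x by move: r3; rewrite it3.
rewrite tx in rzy ezt it3; exists z; split => //.
Qed.

Lemma two_apex (T : finType) (e : rel T) (rot : {perm T * T}) :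
  symmetric e -> irreflexive e -> is_rotation e rot ->
  (forall f, f \in faces e rot -> #|f| = 3) ->
  forall x y, e x y -> 2 < deg e y ->
  exists z z', [/\ z != z', e x z, e y z, e x z' & e y z'].
Proof.
move=> esym eirr hrot hf x y exy dy.
have [z [r1 _ _ eyz ezx]] := tri_face esym eirr hrot hf exy.
have [z' [r1' r2' r3' exz' ez'y]] := tri_face esym eirr hrot hf (y := x) (x := y) ltac:(by rewrite esym).
exists z, z'; split => //; last by rewrite esym.
  apply/eqP => zz; subst z'.
  have inv : forall k, iter k rot (y, x) \in [set (y, x); (y, z)].
    elim=> [|k IH]; first by rewrite !inE eqxx.
    rewrite iterS; move: IH; rewrite !inE => /orP[] /eqP ->; by rewrite ?r1 ?r3' eqxx ?orbT.
  have : [set u | e y u] \subset [set x; z].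
    apply/subsetP => u; rewrite inE => eyu.
    have [k hk] := hrot.2 y x u ltac:(by rewrite esym) eyu.
    have := inv k; rewrite hk !inE !xpair_eqE eqxx /=; done.
  move/subset_leq_card; rewrite cards2 /deg; move: dy; rewrite /deg; case: (x != z) => /=; lia.
by rewrite esym.
Qed.

Lemma no5 (a b i j c : 'I_4) : a != b -> a != i -> a != j -> b != i -> b != j -> i != j ->
  c != a -> c != b -> c != i -> c != j -> False.
Proof. move: a b i j c; do 5! case=> [[|[|[|[|?]]]] ?] //=. Qed.

Lemma side4 (a b i j : 'I_4) : a != b -> a != i -> a != j -> b != i -> b != j -> i != j ->
  ((a == ord0) || (i == ord0)) != ((b == ord0) || (j == ord0)).
Proof. move: a b i j; do 4! case=> [[|[|[|[|?]]]] ?] //=. Qed.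

Lemma cc_in (T : finType) (e : rel T) psi u v c :
  psi u = Some c -> (u == v) || e v u -> c \in closed_colors e psi v.
Proof. by move=> pu h; rewrite inE; apply/existsP; exists u; rewrite h pu eqxx. Qed.

Lemma U_notin (T : finType) (e : rel T) psi v i :
  v \in U_set e psi i -> i \notin closed_colors e psi v.
Proof.
rewrite !inE => /andP[nC nN]; apply/negP => /existsP[u /andP[/orP[/eqP uv|evu] /eqP pu]].
  by move: nC; rewrite ?inE -uv pu eqxx.
by case/negP: nN; apply/existsP; exists u; rewrite ?inE pu eqxx evu.
Qed.

Lemma cc_le3 (T : finType) (e : rel T) psi v i :
  v \in U_set e psi i -> #|closed_colors e psi v| <= 3.
Proof.
move=> vU; have := U_notin vU => ni.
have : closed_colors e psi v \subset [set~ i].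
  by apply/subsetP => c cin; rewrite !inE; apply/eqP => ci; move: ni; rewrite -ci cin.
by move/subset_leq_card; rewrite cardsC1 card_ord.
Qed.

Lemma U_deg (T : finType) (e : rel T) psi v i :
  (forall v, deg e v <= 5 -> #|closed_colors e psi v| = 4) ->
  v \in U_set e psi i -> 5 < deg e v.
Proof.
move=> H5 vU; rewrite ltnNge; apply/negP => hd.
by have := cc_le3 vU; rewrite H5.
Qed.

Lemma U_col (T : finType) (e : rel T) psi v i :
  (forall v, psi v = None -> deg e v = 4) ->
  (forall v, deg e v <= 5 -> #|closed_colors e psi v| = 4) ->
  v \in U_set e psi i -> exists a, psi v = Some a.
Proof.
move=> H3 H5 vU; case E: (psi v) => [a|]; first by exists a.
by have := H3 v E; have := U_deg H5 vU; lia.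
Qed.

Lemma U_missing (T : finType) (e : rel T) psi v i k :
  (forall v, 3 <= #|closed_colors e psi v|) ->
  v \in U_set e psi i -> k \notin closed_colors e psi v -> k = i.
Proof.
move=> H4 vU nk; apply/eqP; apply/negP => /negP ki.
have := U_notin vU => ni.
have : closed_colors e psi v \subset ~: [set i; k].
  apply/subsetP => c cin; rewrite !inE; apply/negP => /orP[] /eqP ce.
    by move: ni; rewrite -ce cin.
  by move: nk; rewrite -ce cin.
move/subset_leq_card; rewrite (cardsCs (~: [set i; k])) setCK cards2 card_ord eq_sym ki /=.
by move=> le; have := leq_trans (H4 v) le.
Qed.

Definition side (T : finType) (e : rel T) (psi : T -> option 'I_4) (v : T) : bool :=
  (psi v == Some ord0) || (ord0 \notin closed_colors e psi v).

Lemma bad_info (T : finType) (e : rel T) psi x y :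
  symmetric e -> proper_partial_4col e psi ->
  (forall v, psi v = None -> deg e v = 4) ->
  (forall v, 3 <= #|closed_colors e psi v|) ->
  (forall v, deg e v <= 5 -> #|closed_colors e psi v| = 4) ->
  bad_edge e psi x y ->
  exists a b i j, [/\ psi x = Some a, psi y = Some b, x \in U_set e psi i, y \in U_set e psi j &
     (a != b /\ a != i /\ a != j /\ b != i /\ b != j /\ i != j)].
Proof.
move=> esym Hp H3 H4 H5 /andP[exy /existsP[i /existsP[j /andP[/andP[ij xU] yU]]]].
have [a pa] := U_col H3 H5 xU; have [b pb] := U_col H3 H5 yU.
exists a, b, i, j; split => //; split; last split; last split; last split; last split => //.
- apply/eqP => ab; apply: (Hp x y exy); [by rewrite pa | by rewrite pa pb ab].
- apply/eqP => ai; move: (U_notin xU); rewrite -ai.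
  by rewrite (cc_in (v := x) pa) // eqxx.
- apply/eqP => aj; move: (U_notin yU); rewrite -aj.
  by rewrite (cc_in (v := y) pa) // esym exy orbT.
- apply/eqP => bi; move: (U_notin xU); rewrite -bi.
  by rewrite (cc_in (v := x) pb) // exy orbT.
- apply/eqP => bj; move: (U_notin yU); rewrite -bj.
  by rewrite (cc_in (v := y) pb) // eqxx.
Qed.

Lemma common_uncolored (T : finType) (e : rel T) psi x y z :
  symmetric e -> proper_partial_4col e psi ->
  (forall v, psi v = None -> deg e v = 4) ->
  (forall v, 3 <= #|closed_colors e psi v|) ->
  (forall v, deg e v <= 5 -> #|closed_colors e psi v| = 4) ->
  bad_edge e psi x y -> e x z -> e y z -> psi z = None.
Proof.
move=> esym Hp H3 H4 H5 bxy exz eyz.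
have [a [b [i [j [pa pb xU yU [ab [ai [aj [bi [bj ij]]]]]]]]]] := bad_info esym Hp H3 H4 H5 bxy.
case pz: (psi z) => [c|] //; exfalso.
apply: (no5 (c := c) ab ai aj bi bj ij).
- apply/eqP => ca; apply: (Hp z x ltac:(by rewrite esym) ltac:(by rewrite pz)).
  by rewrite pz pa ca.
- apply/eqP => cb; apply: (Hp z y ltac:(by rewrite esym) ltac:(by rewrite pz)).
  by rewrite pz pb cb.
- apply/eqP => ci; move: (U_notin xU); rewrite -ci.
  by rewrite (cc_in (v := x) pz) // exz orbT.
- apply/eqP => cj; move: (U_notin yU); rewrite -cj.
  by rewrite (cc_in (v := y) pz) // eyz orbT.
Qed.

Lemma side_bad (T : finType) (e : rel T) psi x y :
  symmetric e -> proper_partial_4col e psi ->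
  (forall v, psi v = None -> deg e v = 4) ->
  (forall v, 3 <= #|closed_colors e psi v|) ->
  (forall v, deg e v <= 5 -> #|closed_colors e psi v| = 4) ->
  bad_edge e psi x y -> side e psi x != side e psi y.
Proof.
move=> esym Hp H3 H4 H5 bxy.
have [a [b [i [j [pa pb xU yU [ab [ai [aj [bi [bj ij]]]]]]]]]] := bad_info esym Hp H3 H4 H5 bxy.
have sv : forall v k c, psi v = Some c -> v \in U_set e psi k ->
    side e psi v = (c == ord0) || (k == ord0).
  move=> v k c pv vU; rewrite /side pv (inj_eq (@Some_inj _)); congr (_ || _).
  apply/idP/idP => [n0|/eqP k0].
    by rewrite (U_missing H4 vU n0).
  by rewrite -k0 U_notin.
rewrite (sv _ _ _ pa xU) (sv _ _ _ pb yU); exact: side4.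
Qed.

Lemma match_bound (T : finType) (e : rel T) psi (rot : {perm T * T}) (M : {set T * T}) :
  symmetric e -> irreflexive e -> is_rotation e rot ->
  (forall f, f \in faces e rot -> #|f| = 3) ->
  proper_partial_4col e psi ->
  (forall v, psi v = None -> deg e v = 4) ->
  (forall v, 3 <= #|closed_colors e psi v|) ->
  (forall v, deg e v <= 5 -> #|closed_colors e psi v| = 4) ->
  (forall m, m \in M -> side e psi m.1 && bad_edge e psi m.1 m.2) ->
  {in M &, injective fst} -> {in M &, injective snd} ->
  #|M| <= #|uncolored psi|.
Proof.
move=> esym eirr hrot hf Hp H3 H4 H5 hM fi si.
set U := uncolored psi.
pose P (m : T * T) w := e m.1 w && e m.2 w.
have h1 : forall m, m \in M -> 2 <= \sum_(w in U) P m w.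
  move=> m mM; have /andP[sm bm] := hM m mM.
  have [a [b [i [j [pa pb xU yU _]]]]] := bad_info esym Hp H3 H4 H5 bm.
  have degy : 2 < deg e m.2 by have := U_deg H5 yU; lia.
  have exy : e m.1 m.2 by case/andP: bm.
  have [z [z' [zz' exz eyz exz' eyz']]] := two_apex esym eirr hrot hf exy degy.
  have zU : z \in U by rewrite inE (common_uncolored esym Hp H3 H4 H5 bm exz eyz).
  have z'U : z' \in U by rewrite inE (common_uncolored esym Hp H3 H4 H5 bm exz' eyz').
  rewrite (bigD1 z) //= (bigD1 z') /=; last by rewrite z'U eq_sym zz'.
  by rewrite /P exz eyz exz' eyz'.
have h2 : forall w, w \in U -> \sum_(m in M) P m w <= 2.
  move=> w wU.
  have -> : \sum_(m in M) P m w = #|[set m | (m \in M) && P m w]|.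
    by rewrite -sum1dep_card big_mkcondr /=; apply: eq_bigr => m _; case: (P m w).
  set Mw := [set m | (m \in M) && P m w].
  have sMw : {subset Mw <= M} by move=> m; rewrite inE => /andP[].
  have c1 : #|fst @: Mw| = #|Mw|.
    by apply: card_in_imset => m1 m2 /sMw h1' /sMw h2'; apply: fi.
  have c2 : #|snd @: Mw| = #|Mw|.
    by apply: card_in_imset => m1 m2 /sMw h1' /sMw h2'; apply: si.
  have c3 : #|fst @: Mw :&: snd @: Mw| = 0.
    apply/eqP; rewrite cards_eq0; apply/eqP/setP => y; rewrite !inE.
    apply/negP => /andP[/imsetP[m1 m1in ->] /imsetP[m2 m2in eq]].
    have /andP[s1 _] := hM m1 (sMw _ m1in).
    have /andP[s2 b2] := hM m2 (sMw _ m2in).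
    have := side_bad esym Hp H3 H4 H5 b2; by rewrite s2 -eq s1.
  have c4 : fst @: Mw :|: snd @: Mw \subset [set u | e w u].
    apply/subsetP => y; rewrite !inE => /orP[] /imsetP[m min ->]; move: min; rewrite inE => /andP[_ /andP[h h']]; by rewrite esym.
  have := subset_leq_card c4; rewrite cardsU c1 c2 c3.
  have : psi w = None by move: wU; rewrite inE => /eqP.
  move/H3; rewrite /deg => ->; lia.
have : \sum_(m in M) 2 <= \sum_(w in U) 2.
  apply: (@leq_trans (\sum_(m in M) \sum_(w in U) P m w)); first by apply: leq_sum.
  rewrite exchange_big /=; exact: leq_sum h2.
rewrite !sum_nat_const; lia.
Qed.

Lemma bad_sym (T : finType) (e : rel T) psi x y :
  symmetric e -> bad_edge e psi x y -> bad_edge e psi y x.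
Proof.
move=> esym /andP[exy /existsP[i /existsP[j /andP[/andP[ij xU] yU]]]].
rewrite /bad_edge esym exy; apply/existsP; exists j; apply/existsP; exists i.
by rewrite eq_sym ij xU yU.
Qed.

Lemma bad_in (T : finType) (e : rel T) psi x y :
  bad_edge e psi x y -> (x \in bad_vertices e psi) && (y \in bad_vertices e psi).
Proof.
move=> b; rewrite !inE; apply/andP; split; apply/existsP.
  by exists y; rewrite b.
by exists x; rewrite b orbT.
Qed.

Unset Implicit Arguments.

Theorem lemma3 (T : finType) (e : rel T) (psi : T -> option 'I_4) :
  smallest_counterexample e ->
  proper_partial_4col e psi ->
  (forall v, psi v = None -> deg e v = 4) ->
  (forall v, 3 <= #|closed_colors e psi v|) ->
  (forall v, deg e v <= 5 -> #|closed_colors e psi v| = 4) ->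
  exists X : {set T}, bad_vertex_cover e psi X /\ #|X| <= #|uncolored psi|.
Proof.
move=> [[[esym eirr] [rot [[hrot _] hf]]] _] Hp H3 H4 H5.
case: (pickP (fun _ : T => true)) => [r0 _|h0]; last first.
  exists set0; split; last by rewrite cards0.
  by split; [exact: sub0set | move=> x; have := h0 x].
set s := side e psi.
pose E := fun x y => s x && bad_edge e psi x y.
have [A [f [g [Ef If Eg Ig]]]] := konig r0 E.
set N := nbh E A.
set M := [set (x, f x) | x in ~: A] :|: [set (g y, y) | y in N].
have hM : forall m, m \in M -> s m.1 && bad_edge e psi m.1 m.2.
  move=> m; rewrite inE => /orP[] /imsetP[x xin ->] /=.
    by have /andP[] := Ef x xin.
  by have /andP[] := Eg x xin.
have gA : forall y, y \in N -> g y \in A by move=> y /Eg /andP[].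
have fN : forall x, x \in ~: A -> f x \notin N by move=> x /Ef /andP[].
have fi : {in M &, injective fst}.
  move=> m1 m2; rewrite !inE => /orP[] /imsetP[x1 x1in ->] /orP[] /imsetP[x2 x2in ->] /= eq.
  - by rewrite eq.
  - by move: x1in; rewrite eq inE gA.
  - by move: x2in; rewrite -eq inE gA.
  - by rewrite (Ig _ _ x1in x2in eq).
have si : {in M &, injective snd}.
  move=> m1 m2; rewrite !inE => /orP[] /imsetP[x1 x1in ->] /orP[] /imsetP[x2 x2in ->] /= eq.
  - by rewrite (If _ _ x1in x2in eq).
  - by move: (fN _ x1in); rewrite eq x2in.
  - by move: (fN _ x2in); rewrite -eq x1in.
  - by rewrite eq.
have bound := match_bound esym eirr hrot hf Hp H3 H4 H5 hM fi si.
have cM : #|M| = #|~: A| + #|N|.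
  rewrite cardsU !card_imset; first last.
  - by move=> a b [].
  - by move=> a b [].
  suff -> : [set (x, f x) | x in ~: A] :&: [set (g y, y) | y in N] = set0 by rewrite cards0 subn0.
  apply/setP => m; rewrite !inE; apply/negP => /andP[/imsetP[x xin ->] /imsetP[y yin [_ eq]]].
  by move: (fN _ xin); rewrite eq yin.
exists ((~: A :|: N) :&: bad_vertices e psi); split.
  split; first exact: subsetIr.
  have key : forall x y, bad_edge e psi x y -> s x ->
      x \in (~: A :|: N) :&: bad_vertices e psi \/ y \in (~: A :|: N) :&: bad_vertices e psi.
    move=> x y bxy sx; have /andP[xb yb] := bad_in bxy.
    case: (boolP (x \in A)) => xA.
      right; rewrite inE yb andbT inE; apply/orP; right.
      by rewrite inE; apply/existsP; exists x; rewrite xA /E sx bxy.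
    by left; rewrite inE xb andbT inE inE xA.
  move=> x y bxy; case sx: (s x); first exact: key.
  have sy : s y.
    by have := side_bad esym Hp H3 H4 H5 bxy; rewrite -/s sx; case: (s y).
  by case: (key y x (bad_sym esym bxy) sy); [right | left].
apply: leq_trans bound; rewrite cM.
apply: leq_trans (subset_leq_card (subsetIl _ _)) _.
by rewrite cardsU leq_subr.
Qed.
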